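(* Let $J\ge2$ be an integer. For $x\in\mathbb R^J$ put $x_{J+1}:=x_1$, $\min x:=\min\{x_1,\dots,x_J\}$, $\max x:=\max\{x_1,\dots,x_J\}$. Then $$\max_{\substack{x\in\mathbb R^J\setminus\{0\}\\ \min x\le0\le\max x}}\frac{|x|^2}{\sum_{j=1}^J(x_{j+1}-x_j)^2}=\max_{y\in\mathbb R^J\setminus\{0\}}\frac{|y|^2}{\sum_{j=1}^J(y_{j+1}-y_j)^2+(y_1+y_J)^2}=\frac{1}{2(1-\cos(\pi/J))},$$ where also $y_{J+1}:=y_1$.
   Context: $|x|$ denotes the Euclidean norm. *)

(* Defs.v *)
From Stdlib Require Import Reals Lra Lia.
Open Scope R_scope.

(* A vector x in R^J is represented by x : nat -> R, using the entries
   x 0, ..., x (J-1) (0-based: x_j of the paper is x (j-1)).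
   Entries with index >= J are ignored by every definition below. *)

Fixpoint rsum (n : nat) (f : nat -> R) : R :=
  match n with
  | O => 0
  | S m => rsum m f + f m
  end.

Definition sqnorm (J : nat) (x : nat -> R) : R := rsum J (fun j => (x j)^2).

Definition cyc_energy (J : nat) (x : nat -> R) : R :=
  rsum J (fun j => (x ((j + 1) mod J)%nat - x j)^2).

Definition nonzero_vec (J : nat) (x : nat -> R) : Prop :=
  exists j, (j < J)%nat /\ x j <> 0.

Definition min_le0_le_max (J : nat) (x : nat -> R) : Prop :=
  (exists j, (j < J)%nat /\ x j <= 0) /\ (exists j, (j < J)%nat /\ 0 <= x j).

Definition is_max_over (P : (nat -> R) -> Prop) (f : (nat -> R) -> R) (m : R) : Prop :=
  (exists x, P x /\ f x = m) /\ (forall x, P x -> f x <= m).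

(* Main.v *)
Require Import Defs.
From Stdlib Require Import Reals Lra Lia Psatz Arith Classical.
Open Scope R_scope.

Lemma rsum_ext n f g : (forall i, (i < n)%nat -> f i = g i) -> rsum n f = rsum n g.
Proof.
  induction n; intros H; simpl; auto.
  rewrite IHn by (intros; apply H; lia). rewrite H by lia. reflexivity.
Qed.

Lemma rsum_shift n h : rsum n (fun i => h (S i)) = rsum n h - h 0%nat + h n.
Proof. induction n; simpl; [ring|]. rewrite IHn. ring. Qed.

Lemma rsum_S n f : rsum (S n) f = rsum n f + f n.
Proof. reflexivity. Qed.

Lemma rsum_lin n a b f g :
  rsum n (fun i => a * f i + b * g i) = a * rsum n f + b * rsum n g.
Proof. induction n; simpl; [ring|]. rewrite IHn. ring. Qed.

Lemma rsum_ge_term n f j : (forall i, 0 <= f i) -> (j < n)%nat -> f j <= rsum n f.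
Proof.
  induction n; intros H Hj; [lia|]. simpl.
  assert (0 <= rsum n f).
  { clear IHn Hj. induction n; simpl; [lra|]. specialize (H n). lra. }
  destruct (Nat.eq_dec j n).
  - subst. lra.
  - assert (f j <= rsum n f) by (apply IHn; auto; lia). specialize (H n). lra.
Qed.

Lemma sqnorm_pos J x : nonzero_vec J x -> 0 < sqnorm J x.
Proof.
  intros [j [Hj Hx]]. unfold sqnorm.
  assert (x j ^ 2 <= rsum J (fun j => x j ^ 2)).
  { apply (rsum_ge_term J (fun j => x j ^ 2)); auto. intros; apply pow2_ge_0. }
  assert (0 < x j ^ 2) by (nra). lra.
Qed.

Lemma cyc_split m x :
  cyc_energy (S m) x = rsum m (fun i => (x (S i) - x i)^2) + (x 0%nat - x m)^2.
Proof.
  unfold cyc_energy. rewrite rsum_S.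
  replace ((m + 1) mod S m)%nat with 0%nat by (rewrite Nat.add_1_r; symmetry; apply Nat.Div0.mod_same). f_equal.
  apply rsum_ext. intros i Hi. rewrite Nat.mod_small by lia. rewrite Nat.add_1_r. reflexivity.
Qed.

Lemma rsum_rot J f m : (J <> 0)%nat ->
  rsum J (fun i => f ((i + m) mod J)%nat) = rsum J f.
Proof.
  intros HJ. induction m.
  - apply rsum_ext. intros i Hi. rewrite Nat.add_0_r, Nat.mod_small; auto.
  - rewrite <- IHm.
    transitivity (rsum J (fun i => (fun t => f ((t + m) mod J)%nat) (S i))).
    { apply rsum_ext. intros. simpl. f_equal. f_equal. lia. }
    rewrite (rsum_shift J (fun t => f ((t + m) mod J)%nat)). simpl.
    replace ((J + m) mod J)%nat with (m mod J)%nat. ring.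
    replace (J + m)%nat with (m + 1 * J)%nat by lia. rewrite Nat.Div0.mod_add. auto.
Qed.

Lemma crossing J x a b : (a < J)%nat -> (b < J)%nat -> x a <= 0 -> 0 <= x b ->
  exists k, (k < J)%nat /\ x k <= 0 /\ 0 <= x ((k + 1) mod J)%nat.
Proof.
  intros Ha Hb Hxa Hxb. apply NNPP. intros Hn.
  assert (H : forall k, (k < J)%nat -> x k <= 0 -> x ((k + 1) mod J)%nat < 0).
  { intros k Hk Hxk. destruct (Rle_lt_dec 0 (x ((k + 1) mod J)%nat)); auto.
    exfalso. apply Hn. exists k. auto. }
  assert (HJ : (J <> 0)%nat) by lia.
  assert (Hall : forall n, x ((a + S n) mod J)%nat < 0).
  { induction n.
    - replace (a + 1)%nat with (a + 1)%nat by lia. apply H; auto.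
    - set (k := ((a + S n) mod J)%nat).
      assert (Hk : (k < J)%nat) by (apply Nat.mod_upper_bound; auto).
      specialize (H k Hk (Rlt_le _ _ IHn)). unfold k in H.
      rewrite Nat.Div0.add_mod_idemp_l in H.
      replace (a + S (S n))%nat with (a + S n + 1)%nat by lia. auto. }
  specialize (Hall (b + J - a - 1)%nat).
  replace (a + S (b + J - a - 1))%nat with (b + 1 * J)%nat in Hall by lia.
  rewrite Nat.Div0.mod_add, Nat.mod_small in Hall by auto. lra.
Qed.

Definition th J := PI / INR J.
Definition Sn J k := sin (INR k * th J).
Definition lam J := 2 * (1 - cos (th J)).
Definition Eg J k y := rsum k (fun i => (y (S i) - y i)^2) - lam J * (rsum k (fun i => y i ^2) - y 0%nat ^2).

Lemma sc1 x : sin x ^ 2 + cos x ^ 2 = 1.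
Proof. pose proof (sin2_cos2 x). unfold Rsqr in H. lra. Qed.

Lemma Sn_rec J k : Sn J (S (S k)) = 2 * cos (th J) * Sn J (S k) - Sn J k /\
  Sn J (S k) ^ 2 - Sn J k * Sn J (S (S k)) = sin (th J) ^ 2.
Proof.
  unfold Sn. rewrite !S_INR. set (t := th J). set (w := INR k * t + t).
  replace ((INR k + 1 + 1) * t) with (w + t) by (unfold w; ring).
  replace ((INR k + 1) * t) with w by (unfold w; ring).
  replace (INR k * t) with (w - t) by (unfold w; ring).
  rewrite sin_plus, sin_minus. pose proof (sc1 w). split; [ring|].
  pose proof (sc1 t). nra.
Qed.

Lemma INRJ_pos J : (2 <= J)%nat -> 0 < INR J.
Proof. intros. apply lt_0_INR. lia. Qed.

Lemma th_pos J : (2 <= J)%nat -> 0 < th J.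
Proof. intros. unfold th. apply Rdiv_lt_0_compat. apply PI_RGT_0. apply INRJ_pos; auto. Qed.

Lemma INR_th J : (2 <= J)%nat -> INR J * th J = PI.
Proof. intros. unfold th. field. apply Rgt_not_eq. apply INRJ_pos; auto. Qed.

Lemma Sn_pos J k : (2 <= J)%nat -> (1 <= k)%nat -> (k < J)%nat -> 0 < Sn J k.
Proof.
  intros. unfold Sn. apply sin_gt_0.
  - apply Rmult_lt_0_compat. apply lt_0_INR; lia. apply th_pos; auto.
  - rewrite <- (INR_th J) by auto. apply Rmult_lt_compat_r. apply th_pos; auto.
    apply lt_INR; auto.
Qed.

Lemma Eg_S J k y : Eg J (S k) y = Eg J k y + (y (S k) - y k)^2 - lam J * y k ^ 2.
Proof. unfold Eg. rewrite !rsum_S. ring. Qed.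

Lemma ind J y m : (2 <= J)%nat -> (S m < J)%nat ->
  Sn J (S m) * Eg J (S m) y >=
  (y 0%nat ^ 2 + y (S m) ^ 2) * (Sn J (S m) - Sn J m) - 2 * y 0%nat * y (S m) * sin (th J).
Proof.
  intros HJ. induction m; intros Hm.
  - unfold Eg, Sn. simpl rsum. rewrite Rmult_0_l, sin_0. simpl INR. rewrite Rmult_1_l.
    apply Req_ge. ring.
  - specialize (IHm ltac:(lia)).
    destruct (Sn_rec J m) as [R1 R2].
    pose proof (Sn_pos J (S m) HJ ltac:(lia) ltac:(lia)) as PB.
    pose proof (Sn_pos J (S (S m)) HJ ltac:(lia) ltac:(lia)) as PS.
    rewrite Eg_S.
    set (A := Sn J m) in *. set (B := Sn J (S m)) in *. set (S1 := Sn J (S (S m))) in *.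
    set (E := Eg J (S m) y) in *. set (a := y 0%nat) in *. set (b := y (S m)) in *.
    set (d := y (S (S m))). set (c := cos (th J)) in *. set (s := sin (th J)) in *.
    unfold lam. fold c.
    assert (Hid : B * (S1 * (E + (d - b)^2 - 2*(1-c)*b^2) - ((a^2+d^2)*(S1-B) - 2*a*d*s)) =
       S1 * (B*E - ((a^2+b^2)*(B-A) - 2*a*b*s)) + (S1*b - a*s - d*B)^2
       + a^2 * (B^2 - A*S1 - s^2)).
    { rewrite R1. ring. }
    rewrite R2, Rminus_diag, Rmult_0_r, Rplus_0_r in Hid.
    assert (0 <= B * (S1 * (E + (d - b)^2 - 2*(1-c)*b^2) - ((a^2+d^2)*(S1-B) - 2*a*d*s))).
    { rewrite Hid. apply Rplus_le_le_0_compat. apply Rmult_le_pos; lra. apply pow2_ge_0. }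
    assert (0 <= S1 * (E + (d - b)^2 - 2*(1-c)*b^2) - ((a^2+d^2)*(S1-B) - 2*a*d*s)).
    { apply (Rmult_le_reg_l B); lra. }
    lra.
Qed.

Lemma antiper J y : (2 <= J)%nat ->
  rsum (J - 1) (fun i => (y (S i) - y i)^2) + (y 0%nat + y (J - 1)%nat)^2 >=
  lam J * rsum J (fun i => y i ^ 2).
Proof.
  intros HJ.
  pose proof (ind J y (J - 2) HJ ltac:(lia)) as H.
  replace (S (J - 2)) with (J - 1)%nat in H by lia.
  assert (HS1 : Sn J (J - 1) = sin (th J)).
  { unfold Sn. rewrite minus_INR by lia. simpl INR.
    replace ((INR J - 1) * th J) with (PI - th J) by (rewrite <- (INR_th J) by auto; ring).
    apply sin_PI_x. }
  assert (HS2 : Sn J (J - 2) = 2 * sin (th J) * cos (th J)).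
  { unfold Sn. rewrite minus_INR by lia. simpl INR.
    replace ((INR J - (1 + 1)) * th J) with (PI - 2 * th J) by (rewrite <- (INR_th J) by auto; ring).
    rewrite sin_PI_x. apply sin_2a. }
  rewrite HS1, HS2 in H.
  assert (Hs : 0 < sin (th J)).
  { rewrite <- HS1. apply Sn_pos; lia. }
  unfold Eg in H.
  assert (HJr : rsum J (fun i => y i ^ 2) = rsum (J - 1) (fun i => y i ^ 2) + y (J - 1)%nat ^ 2).
  { replace J with (S (J - 1)) at 1 by lia. exact (rsum_S (J - 1) (fun i => y i ^ 2)). }
  rewrite HJr.
  set (P := rsum (J - 1) (fun i => (y (S i) - y i)^2)) in *.
  set (r := rsum (J - 1) (fun i => y i ^ 2)) in *.
  set (a := y 0%nat) in *. set (b := y (J - 1)%nat) in *.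
  set (s := sin (th J)) in *. set (c := cos (th J)) in *. unfold lam in H |- *. fold c in H |- *.
  set (E := P - 2 * (1 - c) * (r - a ^ 2)) in *.
  assert (E >= (a^2+b^2)*(1-2*c) - 2*a*b).
  { apply Rle_ge. apply (Rmult_le_reg_l s); auto.
    apply Rge_le in H. replace (s * ((a ^ 2 + b ^ 2) * (1 - 2 * c) - 2 * a * b)) with
      ((a ^ 2 + b ^ 2) * (s - 2 * s * c) - 2 * a * b * s) by ring. lra. }
  unfold E in H0. nra.
Qed.

Lemma tele J phi n :
  rsum n (fun j => (sin (INR (S j) * th J + phi) - sin (INR j * th J + phi))^2
     - (1 - cos (th J)) * (sin (INR j * th J + phi) ^ 2 + sin (INR (S j) * th J + phi) ^ 2))
  = sin (th J) / 2 * (sin (2 * INR n * th J + 2 * phi) - sin (2 * phi)).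
Proof.
  induction n.
  - simpl rsum. simpl INR. replace (2 * 0 * th J + 2 * phi) with (2 * phi) by ring. ring.
  - rewrite rsum_S, IHn. rewrite !S_INR. set (t := th J). set (u := INR n * t + phi).
    replace ((INR n + 1) * t + phi) with (u + t) by (unfold u; ring).
    replace (INR n * t + phi) with u by (unfold u; ring).
    replace (2 * (INR n + 1) * t + 2 * phi) with (2 * (u + t)) by (unfold u; ring).
    replace (2 * INR n * t + 2 * phi) with (2 * u) by (unfold u; ring).
    rewrite !sin_2a, sin_plus, cos_plus.
    idtac.
    set (X := sin u). set (Y := cos u). set (c := cos t). set (s := sin t).
    assert (H1 : ((X*c+Y*s)-X)^2 - (1-c)*(X^2+(X*c+Y*s)^2) - s*((X*c+Y*s)*(Y*c-X*s) - X*Y)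
       = (X^2*c + X*Y*s)*(s^2+c^2-1)) by ring.
    assert (H0 : s^2+c^2=1) by apply sc1.
    rewrite H0, Rminus_diag, Rmult_0_r in H1.
    lra.
Qed.

Lemma split_sum n f k : rsum n (fun j => (f (S j) - f j)^2 - k * (f j ^ 2 + f (S j) ^ 2)) =
  rsum n (fun j => (f (S j) - f j)^2) - k * (2 * rsum n (fun j => f j ^ 2) - f 0%nat ^ 2 + f n ^ 2).
Proof. induction n; [simpl; ring|]. rewrite !rsum_S, IHn. ring. Qed.

Lemma ratio_le N D l : 0 < N -> 0 < l -> l * N <= D -> N / D <= 1 / l.
Proof.
  intros HN Hl HD. assert (0 < D) by nra.
  assert (E : 1 / l - N / D = (D - l * N) * / (D * l)) by (field; lra).
  assert (0 <= (D - l * N) * / (D * l)).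
  { apply Rmult_le_pos. lra. apply Rlt_le, Rinv_0_lt_compat. nra. }
  lra.
Qed.

Lemma ratio_eq N D l : 0 < N -> 0 < l -> D = l * N -> N / D = 1 / l.
Proof. intros. subst. field. lra. Qed.

Lemma lam_pos J : (2 <= J)%nat -> 0 < lam J.
Proof.
  intros HJ. unfold lam.
  replace (th J) with (2 * (th J / 2)) by field. rewrite cos_2a_sin.
  assert (0 < sin (th J / 2)).
  { pose proof (th_pos J HJ). pose proof (INR_th J HJ).
    assert (2 <= INR J) by (replace 2 with (INR 2) by (simpl; ring); apply le_INR; auto).
    apply sin_gt_0; nra. }
  nra.
Qed.

Lemma cyc_J J x : (2 <= J)%nat ->
  cyc_energy J x = rsum (J - 1) (fun i => (x (S i) - x i)^2) + (x 0%nat - x (J - 1)%nat)^2.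
Proof. intros. replace J with (S (J - 1)) at 1 by lia. apply cyc_split. Qed.

Lemma sq_J J x : (2 <= J)%nat ->
  sqnorm J x = rsum (J - 1) (fun i => x i ^ 2) + x (J - 1)%nat ^ 2.
Proof. intros. unfold sqnorm. replace J with (S (J - 1)) at 1 by lia.
  exact (rsum_S (J - 1) (fun i => x i ^ 2)). Qed.

Lemma upper1 J x : (2 <= J)%nat -> nonzero_vec J x -> min_le0_le_max J x ->
  lam J * sqnorm J x <= cyc_energy J x.
Proof.
  intros HJ Hnz [[a [Ha Hxa]] [b [Hb Hxb]]].
  destruct (crossing J x a b Ha Hb Hxa Hxb) as [k [Hk [Hk1 Hk2]]].
  assert (HJ0 : (J <> 0)%nat) by lia.
  set (y := fun i => x ((i + (k + 1)) mod J)%nat).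
  assert (Hsq : sqnorm J y = sqnorm J x).
  { unfold sqnorm, y. exact (rsum_rot J (fun t => x t ^ 2) (k + 1) HJ0). }
  assert (Hcyc : cyc_energy J y = cyc_energy J x).
  { unfold cyc_energy.
    set (G := fun t => (x ((t + 1) mod J)%nat - x t) ^ 2).
    rewrite <- (rsum_rot J G (k + 1) HJ0).
    apply rsum_ext. intros j Hj. unfold G, y.
    rewrite Nat.Div0.add_mod_idemp_l, Nat.Div0.add_mod_idemp_l.
    replace (j + 1 + (k + 1))%nat with (j + (k + 1) + 1)%nat by lia. reflexivity. }
  rewrite <- Hsq, <- Hcyc, cyc_J by auto.
  pose proof (antiper J y HJ).
  assert (Hy0 : y 0%nat = x ((k + 1) mod J)%nat) by reflexivity.
  assert (HyJ : y (J - 1)%nat = x k).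
  { unfold y. replace (J - 1 + (k + 1))%nat with (k + 1 * J)%nat by lia.
    rewrite Nat.Div0.mod_add, Nat.mod_small; auto. }
  unfold sqnorm in *. rewrite Hy0, HyJ in *. nra.
Qed.

Lemma upper2 J y : (2 <= J)%nat ->
  lam J * sqnorm J y <= cyc_energy J y + (y 0%nat + y (J - 1)%nat)^2.
Proof.
  intros HJ. rewrite cyc_J by auto. pose proof (antiper J y HJ). unfold sqnorm.
  pose proof (pow2_ge_0 (y 0%nat - y (J - 1)%nat)). lra.
Qed.

Theorem lemma4p1 (J : nat) (HJ : (2 <= J)%nat) :
  is_max_over (fun x => nonzero_vec J x /\ min_le0_le_max J x)
              (fun x => sqnorm J x / cyc_energy J x)
              (1 / (2 * (1 - cos (PI / INR J))))
  /\
  is_max_over (fun y => nonzero_vec J y)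
              (fun y => sqnorm J y / (cyc_energy J y + (y 0%nat + y (J - 1)%nat)^2))
              (1 / (2 * (1 - cos (PI / INR J)))).
Proof.
  change (2 * (1 - cos (PI / INR J))) with (lam J).
  pose proof (lam_pos J HJ) as Hl.
  pose proof (INR_th J HJ) as HIth.
  split; split.
  - set (x := fun j => sin (INR j * th J + 0)).
    assert (Hnz : nonzero_vec J x).
    { exists 1%nat. split; [lia|]. unfold x. rewrite Rplus_0_r.
      pose proof (Sn_pos J 1 HJ ltac:(lia) ltac:(lia)). unfold Sn in H. lra. }
    exists x. split. split; auto.
    { split; exists 0%nat; (split; [lia|]); unfold x; simpl INR;
      rewrite Rmult_0_l, Rplus_0_r, sin_0; lra. }
    apply ratio_eq; auto. apply sqnorm_pos; auto.
    rewrite cyc_J by auto.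
    assert (Hx0 : x 0%nat = 0) by (unfold x; simpl INR; rewrite Rmult_0_l, Rplus_0_r; apply sin_0).
    assert (HxJ : x J = 0) by (unfold x; rewrite Rplus_0_r, HIth; apply sin_PI).
    assert (Hr : rsum (J - 1) (fun i => (x (S i) - x i) ^ 2) + (x 0%nat - x (J - 1)%nat) ^ 2
               = rsum J (fun i => (x (S i) - x i) ^ 2)).
    { replace J with (S (J - 1)) at 3 by lia. rewrite rsum_S.
      replace (S (J - 1)) with J by lia. rewrite Hx0, HxJ. ring. }
    rewrite Hr.
    assert (T : rsum J (fun j => (x (S j) - x j)^2) - (1 - cos (th J)) *
       (2 * rsum J (fun j => x j ^ 2) - x 0%nat ^ 2 + x J ^ 2)
       = sin (th J) / 2 * (sin (2 * INR J * th J + 2 * 0) - sin (2 * 0))).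
    { rewrite <- split_sum. exact (tele J 0 J). }
    replace (2 * INR J * th J + 2 * 0) with (2 * PI) in T by (rewrite <- HIth; ring).
    rewrite sin_2PI, Rmult_0_r, sin_0 in T.
    unfold sqnorm, lam. rewrite Hx0, HxJ in T. lra.
  - intros x [Hnz Hm]. apply ratio_le; auto. apply sqnorm_pos; auto. apply upper1; auto.
  - set (v := fun j => sin (INR j * th J + th J / 2)).
    assert (Hh : 0 < sin (th J / 2)).
    { pose proof (th_pos J HJ).
      assert (2 <= INR J) by (replace 2 with (INR 2) by (simpl; ring); apply le_INR; auto).
      apply sin_gt_0; nra. }
    assert (Hv0 : v 0%nat = sin (th J / 2)) by (unfold v; simpl INR; rewrite Rmult_0_l, Rplus_0_l; auto).
    assert (HvJ : v (J - 1)%nat = sin (th J / 2)).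
    { unfold v. rewrite minus_INR by lia. simpl INR.
      replace ((INR J - 1) * th J + th J / 2) with (PI - th J / 2) by (rewrite <- HIth; field).
      apply sin_PI_x. }
    assert (Hnz : nonzero_vec J v).
    { exists 0%nat. split; [lia|]. rewrite Hv0. lra. }
    exists v. split; auto.
    apply ratio_eq; auto. apply sqnorm_pos; auto.
    rewrite cyc_J, sq_J by auto.
    assert (T : rsum (J - 1) (fun j => (v (S j) - v j)^2) - (1 - cos (th J)) *
       (2 * rsum (J - 1) (fun j => v j ^ 2) - v 0%nat ^ 2 + v (J - 1)%nat ^ 2)
       = sin (th J) / 2 * (sin (2 * INR (J - 1) * th J + 2 * (th J / 2)) - sin (2 * (th J / 2)))).
    { rewrite <- split_sum. exact (tele J (th J / 2) (J - 1)). }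
    replace (2 * INR (J - 1) * th J + 2 * (th J / 2)) with (2 * PI - th J) in T
      by (rewrite minus_INR by lia; simpl INR; rewrite <- HIth; field).
    replace (2 * (th J / 2)) with (th J) in T by field.
    rewrite sin_minus, sin_2PI, cos_2PI in T.
    rewrite Hv0, HvJ in *.
    set (h := sin (th J / 2)) in *.
    assert (Hc : cos (th J) = 1 - 2 * h * h).
    { unfold h. rewrite <- cos_2a_sin. f_equal. field. }
    assert (Hs : sin (th J) = 2 * h * cos (th J / 2)).
    { unfold h. rewrite <- sin_2a. f_equal. field. }
    assert (Hsc : h ^ 2 + cos (th J / 2) ^ 2 = 1) by apply sc1.
    unfold lam. rewrite Hc in *. rewrite Hs in T.
    set (r := rsum (J - 1) (fun j => v j ^ 2)) in *.
    set (P := rsum (J - 1) (fun j => (v (S j) - v j) ^ 2)) in *.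
    set (k := cos (th J / 2)) in *.
    nra.
  - intros y Hnz. apply ratio_le; auto. apply sqnorm_pos; auto. apply upper2; auto.
Qed.
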